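(* In the random order model, algorithm Random achieves an asymptotic approximation ratio of at most $3/4$ for one-sided bipartite matching.
   Context: One-sided bipartite matching: offline vertices are known in advance; online vertices arrive one at a time, each with its set of offline neighbours, and must be irrevocably matched to an unmatched neighbour or left unmatched; the goal is a maximum-size matching. Algorithm Random: when an online vertex arrives, if it has unmatched neighbours, match it to one of them chosen uniformly at random. Random order model (ROM): the adversary chooses the graph, and the arrival order of the online vertices is a uniformly random permutation. The asymptotic approximation ratio of $\mathbb{A}$ in ROM is $\liminf_{n}\inf_{I\in\mathcal{I}_n} \mathbb{E}[v(\mathbb{A},I(\sigma))]/v(I)$, where the expectation is over the uniformly random permutation $\sigma$ of the $n$ data items (and the algorithm's randomness), and $v(I)$ is the maximum matching size. *)

(* Defs.v *)
From HB Require Import structures.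
From mathcomp Require Import all_boot all_order all_algebra all_fingroup.
From mathcomp Require Import all_classical all_reals all_analysis.
Set Implicit Arguments. Unset Strict Implicit. Unset Printing Implicit Defensive.
Import Order.TTheory GRing.Theory Num.Theory.
Local Open Scope ring_scope.

(* An instance with n online vertices ('I_n, the data items) and an arbitrary
   finite number [offl] of offline vertices ('I_offl); [nbr i] is the set of
   offline neighbours of online vertex i. *)
Record instance (n : nat) := Instance {
  offl : nat;
  nbr : 'I_n -> {set 'I_offl}
}.

Definition is_matching n (I : instance n) (F : {set 'I_n * 'I_(offl I)}) : bool :=
  [forall e in F, e.2 \in nbr I e.1] &&
  [forall e in F, forall f in F, ((e.1 == f.1) || (e.2 == f.2)) ==> (e == f)].

Definition opt n (I : instance n) : nat :=
  \max_(F : {set 'I_n * 'I_(offl I)} | is_matching F) #|F|.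

(* Expected number of matches made by algorithm Random when the online vertices
   arrive with neighbour sets given by the sequence [s], and the offline
   vertices in [M] are already matched. On arrival, if the set A of unmatched
   neighbours is nonempty, one of them is chosen uniformly at random. *)
Fixpoint rand_val (R : realType) (m : nat) (s : seq {set 'I_m}) (M : {set 'I_m}) : R :=
  match s with
  | [::] => 0
  | N :: s' =>
      let A := N :\: M in
      if A == finset.set0 then rand_val R s' M
      else 1 + (#|A|%:R)^-1 * \sum_(u in A) rand_val R s' (u |: M)
  end.

(* E[v(Random, I(sigma))]: average over uniformly random arrival orders
   sigma (position k receives online vertex sigma k). *)
Definition exp_random (R : realType) n (I : instance n) : R :=
  (#|{perm 'I_n}|%:R)^-1 *
  \sum_(sigma : {perm 'I_n})
     rand_val R [seq nbr I (sigma k) | k <- enum 'I_n] finset.set0.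

Definition ratio (R : realType) n (I : instance n) : R :=
  exp_random R I / (opt I)%:R.

(* inf over instances with n data items (with v(I) > 0, so the ratio is
   defined) of E[v(Random, I(sigma))]/v(I). *)
Definition ratio_inf (R : realType) (n : nat) : R :=
  inf [set r : R | exists I : instance n, (0 < opt I)%N /\ ratio R I = r].

Definition asymptotic_ratio_random (R : realType) : R :=
  limn_inf (fun n => ratio_inf R n).

(* Main.v *)
From Stdlib Require Import NArith.
Require Import Defs.
From HB Require Import structures.
From mathcomp Require Import all_boot all_order all_algebra all_fingroup.
From mathcomp Require Import all_classical all_reals all_analysis.
From mathcomp Require Import ring lra zify.
Set Implicit Arguments. Unset Strict Implicit. Unset Printing Implicit Defensive.
Import Order.TTheory GRing.Theory Num.Theory.
Local Open Scope ring_scope.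

Definition utab : seq (seq (seq N)) :=
  [:: [:: [:: 0%num; 0%num; 0%num; 0%num; 0%num; 0%num; 0%num; 0%num];
    [:: 1000000%num; 1000000%num; 1000000%num; 1000000%num; 1000000%num; 1000000%num; 1000000%num; 0%num];
    [:: 2000000%num; 2000000%num; 2000000%num; 2000000%num; 2000000%num; 2000000%num; 0%num; 0%num];
    [:: 3000000%num; 3000000%num; 3000000%num; 3000000%num; 3000000%num; 0%num; 0%num; 0%num];
    [:: 4000000%num; 4000000%num; 4000000%num; 4000000%num; 0%num; 0%num; 0%num; 0%num];
    [:: 5000000%num; 5000000%num; 5000000%num; 0%num; 0%num; 0%num; 0%num; 0%num];
    [:: 6000000%num; 6000000%num; 0%num; 0%num; 0%num; 0%num; 0%num; 0%num];
    [:: 7000000%num; 0%num; 0%num; 0%num; 0%num; 0%num; 0%num; 0%num]];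
  [:: [:: 1000000%num; 1000000%num; 1000000%num; 1000000%num; 1000000%num; 1000000%num; 1000000%num; 1000000%num];
    [:: 1750000%num; 1750000%num; 1750000%num; 1750000%num; 1750000%num; 1750000%num; 1750000%num; 0%num];
    [:: 2611112%num; 2611112%num; 2611112%num; 2611112%num; 2611112%num; 2611112%num; 0%num; 0%num];
    [:: 3520834%num; 3520834%num; 3520834%num; 3520834%num; 3520834%num; 0%num; 0%num; 0%num];
    [:: 4456668%num; 4456668%num; 4456668%num; 4456668%num; 0%num; 0%num; 0%num; 0%num];
    [:: 5408335%num; 5408335%num; 5408335%num; 0%num; 0%num; 0%num; 0%num; 0%num];
    [:: 6370410%num; 6370410%num; 0%num; 0%num; 0%num; 0%num; 0%num; 0%num];
    [:: 7339734%num; 0%num; 0%num; 0%num; 0%num; 0%num; 0%num; 0%num]];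
  [:: [:: 2000000%num; 2000000%num; 2000000%num; 2000000%num; 2000000%num; 2000000%num; 2000000%num; 2000000%num];
    [:: 2583334%num; 2583334%num; 2583334%num; 2583334%num; 2583334%num; 2583334%num; 2583334%num; 0%num];
    [:: 3310186%num; 3310186%num; 3310186%num; 3310186%num; 3310186%num; 3310186%num; 0%num; 0%num];
    [:: 4121529%num; 4121529%num; 4121529%num; 4121529%num; 4121529%num; 0%num; 0%num; 0%num];
    [:: 4983687%num; 4983687%num; 4983687%num; 4983687%num; 0%num; 0%num; 0%num; 0%num];
    [:: 5878428%num; 5878428%num; 5878428%num; 0%num; 0%num; 0%num; 0%num; 0%num];
    [:: 6795265%num; 6795265%num; 0%num; 0%num; 0%num; 0%num; 0%num; 0%num];
    [:: 7727779%num; 0%num; 0%num; 0%num; 0%num; 0%num; 0%num; 0%num]];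
  [:: [:: 3000000%num; 3000000%num; 3000000%num; 3000000%num; 3000000%num; 3000000%num; 3000000%num; 3000000%num];
    [:: 3468751%num; 3468751%num; 3468751%num; 3468751%num; 3468751%num; 3468751%num; 3468751%num; 0%num];
    [:: 4082872%num; 4082872%num; 4082872%num; 4082872%num; 4082872%num; 4082872%num; 0%num; 0%num];
    [:: 4797947%num; 4797947%num; 4797947%num; 4797947%num; 4797947%num; 0%num; 0%num; 0%num];
    [:: 5581953%num; 5581953%num; 5581953%num; 5581953%num; 0%num; 0%num; 0%num; 0%num];
    [:: 6413525%num; 6413525%num; 6413525%num; 0%num; 0%num; 0%num; 0%num; 0%num];
    [:: 7278819%num; 7278819%num; 0%num; 0%num; 0%num; 0%num; 0%num; 0%num];
    [:: 8168723%num; 0%num; 0%num; 0%num; 0%num; 0%num; 0%num; 0%num]];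
  [:: [:: 4000000%num; 4000000%num; 4000000%num; 4000000%num; 4000000%num; 4000000%num; 4000000%num; 4000000%num];
    [:: 4387501%num; 4387501%num; 4387501%num; 4387501%num; 4387501%num; 4387501%num; 4387501%num; 0%num];
    [:: 4911473%num; 4911473%num; 4911473%num; 4911473%num; 4911473%num; 4911473%num; 0%num; 0%num];
    [:: 5540141%num; 5540141%num; 5540141%num; 5540141%num; 5540141%num; 0%num; 0%num; 0%num];
    [:: 6247445%num; 6247445%num; 6247445%num; 6247445%num; 0%num; 0%num; 0%num; 0%num];
    [:: 7013269%num; 7013269%num; 7013269%num; 0%num; 0%num; 0%num; 0%num; 0%num];
    [:: 7822817%num; 7822817%num; 0%num; 0%num; 0%num; 0%num; 0%num; 0%num];
    [:: 8665450%num; 0%num; 0%num; 0%num; 0%num; 0%num; 0%num; 0%num]];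
  [:: [:: 5000000%num; 5000000%num; 5000000%num; 5000000%num; 5000000%num; 5000000%num; 5000000%num; 5000000%num];
    [:: 5328126%num; 5328126%num; 5328126%num; 5328126%num; 5328126%num; 5328126%num; 5328126%num; 0%num];
    [:: 5781007%num; 5781007%num; 5781007%num; 5781007%num; 5781007%num; 5781007%num; 0%num; 0%num];
    [:: 6335778%num; 6335778%num; 6335778%num; 6335778%num; 6335778%num; 0%num; 0%num; 0%num];
    [:: 6972347%num; 6972347%num; 6972347%num; 6972347%num; 0%num; 0%num; 0%num; 0%num];
    [:: 7673715%num; 7673715%num; 7673715%num; 0%num; 0%num; 0%num; 0%num; 0%num];
    [:: 8426081%num; 8426081%num; 0%num; 0%num; 0%num; 0%num; 0%num; 0%num];
    [:: 9218609%num; 0%num; 0%num; 0%num; 0%num; 0%num; 0%num; 0%num]];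
  [:: [:: 6000000%num; 6000000%num; 6000000%num; 6000000%num; 6000000%num; 6000000%num; 6000000%num; 6000000%num];
    [:: 6283483%num; 6283483%num; 6283483%num; 6283483%num; 6283483%num; 6283483%num; 6283483%num; 0%num];
    [:: 6680186%num; 6680186%num; 6680186%num; 6680186%num; 6680186%num; 6680186%num; 0%num; 0%num];
    [:: 7173196%num; 7173196%num; 7173196%num; 7173196%num; 7173196%num; 0%num; 0%num; 0%num];
    [:: 7747134%num; 7747134%num; 7747134%num; 7747134%num; 0%num; 0%num; 0%num; 0%num];
    [:: 8388284%num; 8388284%num; 8388284%num; 0%num; 0%num; 0%num; 0%num; 0%num];
    [:: 9084740%num; 9084740%num; 0%num; 0%num; 0%num; 0%num; 0%num; 0%num];
    [:: 9826467%num; 0%num; 0%num; 0%num; 0%num; 0%num; 0%num; 0%num]];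
  [:: [:: 7000000%num; 7000000%num; 7000000%num; 7000000%num; 7000000%num; 7000000%num; 7000000%num; 7000000%num];
    [:: 7249024%num; 7249024%num; 7249024%num; 7249024%num; 7249024%num; 7249024%num; 7249024%num; 0%num];
    [:: 7600897%num; 7600897%num; 7600897%num; 7600897%num; 7600897%num; 7600897%num; 0%num; 0%num];
    [:: 8042677%num; 8042677%num; 8042677%num; 8042677%num; 8042677%num; 0%num; 0%num; 0%num];
    [:: 8562418%num; 8562418%num; 8562418%num; 8562418%num; 0%num; 0%num; 0%num; 0%num];
    [:: 9149170%num; 9149170%num; 9149170%num; 0%num; 0%num; 0%num; 0%num; 0%num];
    [:: 9793036%num; 9793036%num; 0%num; 0%num; 0%num; 0%num; 0%num; 0%num];
    [:: 10485246%num; 0%num; 0%num; 0%num; 0%num; 0%num; 0%num; 0%num]]].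
Definition Kn : N := 1000000%num.
Definition uget (a x z : nat) : N := nth 0%num (nth [::] (nth [::] utab a) x) z.
Definition checkN (a x z : nat) : bool :=
  let a' := N.of_nat a in let x' := N.of_nat x in let z' := N.of_nat z in
  N.leb (N.add (N.add (N.mul a' (N.add (N.add (N.mul (N.add 1 x') Kn) (uget a.-1 x z))
                               (N.mul x' (uget a.-1 x.-1 z.+1))))
          (N.mul (N.mul x' (N.add 1 x')) (N.add Kn (uget a x.-1 z))))
          (N.mul (N.mul z' (N.add 1 x')) (uget a x z.-1)))
        (N.mul (N.mul (N.of_nat (a + x + z)%N) (N.add 1 x')) (uget a x z)).
Definition check_all : bool :=
  all (fun a => all (fun x => all (fun z => ((x + z)%N <= 7)%N ==> checkN a x z) (iota 0 8)) (iota 0 8)) (iota 0 8).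
Lemma check_allT : check_all = true.
Proof. by vm_compute. Qed.
Lemma final_check : N.leb (N.mul 2 (uget 7 7 0)) (N.mul 21 Kn) = true.
Proof. by vm_compute. Qed.

Local Open Scope ring_scope.

Section Perm.
Variables (R : realType) (m : nat).

Definition stepR (N : {set 'I_m}) (g : {set 'I_m} -> R) (M : {set 'I_m}) : R :=
  let A := N :\: M in
  if A == finset.set0 then g M
  else 1 + (#|A|%:R)^-1 * \sum_(u in A) g (u |: M).

Fixpoint Dn (n : nat) : ('I_n -> {set 'I_m}) -> {set 'I_m} -> R :=
  match n with
  | 0 => fun _ _ => 0
  | n'.+1 => fun f M => (n'.+1%:R)^-1 *
       \sum_(i < n'.+1) stepR (f i) (Dn (fun j => f (lift i j))) M
  end.

Lemma rand_val_cons N s M : rand_val R (N :: s) M = stepR N (rand_val R s) M.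
Proof. by []. Qed.

Lemma sum_stepR (T : finType) N (g : T -> {set 'I_m} -> R) G M :
  (forall M', \sum_t g t M' = #|T|%:R * G M') ->
  \sum_t stepR N (g t) M = #|T|%:R * stepR N G M.
Proof.
move=> H; rewrite /stepR; case: ifP => _; first exact: H.
rewrite big_split /= sumr_const -big_distrr /= exchange_big /=.
rewrite (eq_bigr (fun u => #|T|%:R * G (u |: M))); last by move=> u _; exact: H.
rewrite -big_distrr /= mulrDr mulr1 [X in _ + X]mulrCA.
by [].
Qed.

Lemma sum_perm_lift n (F : 'S_n.+1 -> R) (i : 'I_n.+1) :
  \sum_(s : 'S_n.+1 | s ord0 == i) F s = \sum_(t : 'S_n) F (lift_perm ord0 i t).
Proof.
rewrite (reindex (lift_perm ord0 i)); last first.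
  pose ulsf i (s : 'S_n.+1) k := odflt k (unlift (s i) (s (lift i k))).
  have ulsfK i0 (s : 'S_n.+1) k: lift (s i0) (ulsf i0 s k) = s (lift i0 k).
    rewrite /ulsf; have:= neq_lift i0 k.
    by rewrite -(can_eq (permK s)) => /unlift_some[] ? ? ->.
  have inj_ulsf: injective (ulsf ord0 _).
    move=> s; apply: can_inj (ulsf (s ord0) s^-1%g) _ => k'.
    by rewrite {1}/ulsf ulsfK !permK liftK.
  exists (fun s => perm (inj_ulsf s)) => [s _ | s].
    by apply/permP=> k'; rewrite permE /ulsf lift_perm_lift lift_perm_id liftK.
  move/(s _ =P _) => si0; apply/permP=> k.
  case: (unliftP ord0 k) => [k'|] ->; rewrite ?lift_perm_id //.
  by rewrite lift_perm_lift -si0 permE ulsfK.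
by apply: eq_bigl => s; rewrite lift_perm_id eqxx.
Qed.

Lemma perm_sum n (f : 'I_n -> {set 'I_m}) M :
  \sum_(s : 'S_n) rand_val R [seq f (s k) | k <- enum 'I_n] M = n`!%:R * Dn f M.
Proof.
elim: n f M => [|n IH] f M.
  by rewrite /= mulr0 big1 // => s _; rewrite enum_ord0.
rewrite (partition_big (fun s : 'S_n.+1 => s ord0) xpredT) //=.
rewrite (eq_bigr (fun i => n`!%:R * stepR (f i) (Dn (fun j => f (lift i j))) M)).
  rewrite -big_distrr /= factS natrM.
  have hn : (n.+1%:R : R) != 0 by rewrite pnatr_eq0.
  by field.
move=> i _; rewrite sum_perm_lift.
rewrite (eq_bigr (fun t : 'S_n => stepR (f i)
   (rand_val R [seq (fun j => f (lift i j)) (t k) | k <- enum 'I_n]) M)).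
  rewrite -card_Sn; apply: sum_stepR => M'; rewrite card_Sn; exact: IH.
move=> t _; rewrite enum_ordSl /= lift_perm_id -map_comp.
congr (stepR _ (rand_val R _) M); apply: eq_map => k /=.
by rewrite lift_perm_lift.
Qed.

End Perm.

Lemma checkP (a x z : nat) : (a <= 7)%N -> (x + z <= 7)%N -> checkN a x z.
Proof.
move=> ha hxz; have H := check_allT; rewrite /check_all in H.
have Ha : a \in iota 0 8 by rewrite mem_iota; lia.
have Hx : x \in iota 0 8 by rewrite mem_iota; lia.
have Hz : z \in iota 0 8 by rewrite mem_iota; lia.
move: H => /seq.allP H; move: (H a Ha) => /seq.allP H2; move: (H2 x Hx) => /seq.allP H3.
by move: (H3 z Hz); rewrite hxz.
Qed.

Definition uval (a x z : nat) : nat := locked (N.to_nat (uget a x z)).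
Definition Knat : nat := locked (N.to_nat Kn).

Lemma checkNat (a x z : nat) : checkN a x z ->
  (a * ((1 + x) * Knat + uval a.-1 x z + x * uval a.-1 x.-1 z.+1)
   + x * (1 + x) * (Knat + uval a x.-1 z)
   + z * (1 + x) * uval a x z.-1
   <= (a + x + z) * (1 + x) * uval a x z)%N.
Proof. rewrite /checkN /uval /Knat -!lock => /N.leb_le H. lia. Qed.

Section R.
Variable R : realType.
Definition Ur (a x z : nat) : R := (uval a x z)%:R / (Knat)%:R.

Lemma Kpos : (0 < Knat)%N.
Proof. by rewrite /Knat -lock /Kn; lia. Qed.

Lemma alg_ineq (a x z k A1 A2 X1 Z1 U0 : R) : 0 < k -> 0 <= x ->
  a * ((1 + x) * k + A1 + x * A2) + x * (1 + x) * (k + X1) + z * (1 + x) * Z1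
    <= (a + x + z) * (1 + x) * U0 ->
  a * (1 + (1 + x)^-1 * (A1 / k + x * (A2 / k))) + x * (1 + X1 / k) + z * (Z1 / k)
    <= (a + x + z) * (U0 / k).
Proof.
move=> kp x0 H.
have xp : 0 < 1 + x by rewrite ltr_pwDl.
have kn : k != 0 by rewrite gt_eqF.
have xn : 1 + x != 0 by rewrite gt_eqF.
have E1 : a * (1 + (1 + x)^-1 * (A1 / k + x * (A2 / k))) + x * (1 + X1 / k) + z * (Z1 / k)
   = (a * ((1 + x) * k + A1 + x * A2) + x * (1 + x) * (k + X1) + z * (1 + x) * Z1)
     * ((1 + x) * k)^-1.
  by field; rewrite kn xn.
have E2 : (a + x + z) * (U0 / k) = ((a + x + z) * (1 + x) * U0) * ((1 + x) * k)^-1.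
  by field; rewrite kn xn.
rewrite E1 E2; apply: ler_wpM2r => //.
by rewrite invr_ge0 mulr_ge0 // ltW.
Qed.

Lemma check_R (a x z : nat) : (a <= 7)%N -> (x + z <= 7)%N ->
  a%:R * (1 + (1 + x%:R)^-1 * (Ur a.-1 x z + x%:R * Ur a.-1 x.-1 z.+1))
  + x%:R * (1 + Ur a x.-1 z) + z%:R * Ur a x z.-1
  <= (a%:R + x%:R + z%:R) * Ur a x z.
Proof.
move=> ha hxz; have := checkNat (checkP ha hxz).
rewrite -(ler_nat R) !(natrD, natrM) /Ur => H.
apply: alg_ineq => //; first by rewrite ltr0n Kpos.
Qed.
End R.

Definition V2 : {set 'I_14} := [set j : 'I_14 | (7 <= j)%N].
Definition cl (M N : {set 'I_14}) : nat :=
  if N == finset.set0 then 3 else if #|N| == 1%N then (if N \subset M then 2 else 1) else 0.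
Definition cnt n (f : 'I_n -> {set 'I_14}) M (c : nat) : nat := (\sum_(j < n) (cl M (f j) == c))%N.

Definition InvS n (f : 'I_n -> {set 'I_14}) (M : {set 'I_14}) : Prop :=
  [/\ forall j, f j = finset.set0 \/ (exists p : 'I_14, [/\ (p < 7)%N, p \notin M & f j = p |: V2])
                  \/ (exists v : 'I_14, (7 <= v)%N /\ f j = [set v]),
      forall j k, f j = f k -> f j != finset.set0 -> j = k &
      forall v : 'I_14, (7 <= v)%N -> v \notin M -> exists j, f j = [set v]].

Lemma card_setord n (P : pred nat) : #|[set j : 'I_n | P j]| = (\sum_(0 <= i < n | P i) 1)%N.
Proof. by rewrite big_mkord sum1_card; apply: eq_card => j; rewrite inE. Qed.

Lemma cardV2 : #|V2| = 7%N.
Proof. by rewrite card_setord unlock. Qed.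

Lemma notin_V2 (p : 'I_14) : (p < 7)%N -> p \notin V2.
Proof. by rewrite inE -ltnNge. Qed.

Lemma card_pV2 (p : 'I_14) : (p < 7)%N -> #|p |: V2| = 8%N.
Proof. by move=> hp; rewrite cardsU1 notin_V2 // cardV2. Qed.

Lemma cl_lt4 M N : (cl M N < 4)%N.
Proof. by rewrite /cl; case: ifP => _ //; case: ifP => _ //; case: ifP. Qed.

Lemma cl0 M : cl M finset.set0 = 3%N.
Proof. by rewrite /cl eqxx. Qed.

Lemma clA M (p : 'I_14) : (p < 7)%N -> cl M (p |: V2) = 0%N.
Proof.
move=> hp; rewrite /cl card_pV2 //; case: ifP => // /eqP/setP/(_ p).
by rewrite !inE eqxx.
Qed.

Lemma cl1 M (v : 'I_14) : cl M [set v] = if v \in M then 2%N else 1%N.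
Proof.
rewrite /cl cards1 finset.sub1set; case: ifP => // /eqP/setP/(_ v).
by rewrite !inE eqxx.
Qed.

Lemma cl_add w M N : N != [set w] -> cl (w |: M) N = cl M N.
Proof.
move=> hN; rewrite /cl; case: ifP => // _; case: ifP => // /cards1P [u eNu].
rewrite eNu !finset.sub1set !inE.
have /negbTE -> : u != w by apply: contraNneq hN => <-; rewrite eNu.
by [].
Qed.

Lemma cnt_lift n (f : 'I_n.+1 -> {set 'I_14}) M (c : nat) i :
  cnt f M c = ((cl M (f i) == c) + cnt (fun j => f (lift i j)) M c)%N.
Proof. by rewrite /cnt (bigD1_ord i). Qed.

Lemma cnt_same n (g : 'I_n -> {set 'I_14}) M M' (c : nat) :
  (forall j, cl M' (g j) = cl M (g j)) -> cnt g M' c = cnt g M c.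
Proof. by move=> H; apply: eq_bigr => j _; rewrite H. Qed.

Lemma cnt_change n (g : 'I_n -> {set 'I_14}) M M' j0 (c : nat) :
  (forall j, j != j0 -> cl M' (g j) = cl M (g j)) ->
  (cnt g M' c + (cl M (g j0) == c) = cnt g M c + (cl M' (g j0) == c))%N.
Proof.
move=> H; rewrite /cnt (bigD1 j0) //= [in RHS](bigD1 j0) //=.
rewrite (eq_bigr (fun j => nat_of_bool (cl M (g j) == c))) => [|j /H -> //].
lia.
Qed.

Lemma cnt_tot n (f : 'I_n -> {set 'I_14}) M :
  (cnt f M 0 + cnt f M 1 + cnt f M 2 + cnt f M 3 = n)%N.
Proof.
elim: n f => [|n IH] f; first by rewrite /cnt !big_ord0.
rewrite !(cnt_lift _ _ _ ord0); have := IH (fun j => f (lift ord0 j)).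
have := cl_lt4 M (f ord0); case: (cl M (f ord0)) => [|[|[|[|]]]] //= _; lia.
Qed.

Lemma Inv_skip n (f : 'I_n.+1 -> {set 'I_14}) M i :
  InvS f M -> f i :\: M = finset.set0 -> InvS (fun j => f (lift i j)) M.
Proof.
move=> [H1 H2 H3] Hi; split.
- by move=> j; exact: H1.
- by move=> j k /H2 h /h /lift_inj.
- move=> v hv vM; have [j fj] := H3 v hv vM.
  case: (unliftP i j) => [j'|] ej; first by exists j'; rewrite -ej.
  by move: Hi; rewrite -ej fj => /setP/(_ v); rewrite !inE eqxx (negbTE vM).
Qed.

Lemma Inv_take n (f : 'I_n.+1 -> {set 'I_14}) M i w :
  InvS f M -> w \in f i :\: M -> InvS (fun j => f (lift i j)) (w |: M).
Proof.
move=> [H1 H2 H3] Hw.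
have wi : w \in f i by move: Hw; rewrite inE => /andP[].
have wM : w \notin M by move: Hw; rewrite inE => /andP[].
split.
- move=> j; case: (H1 (lift i j)) => [->|[[p [p7 pM ep]]|hB]]; [by left | right; left | by right; right].
  exists p; split => //; rewrite !inE negb_or pM andbT; apply/eqP => epw.
  case: (H1 i) => [fi0|[[p' [p'7 p'M ep']]|[v [v7 ev]]]].
  + by move: wi; rewrite fi0 inE.
  + move: wi; rewrite ep' !inE => /orP[/eqP ewp'|].
    * have efe : f (lift i j) = f i by rewrite ep ep' epw ewp'.
      have ne : f (lift i j) != finset.set0.
        by rewrite ep; apply/set0Pn; exists p; rewrite !inE eqxx.
      by have := H2 _ _ efe ne => /eqP; rewrite eq_sym (negbTE (neq_lift i j)).
    * by rewrite -epw; move: p7; clear; lia.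
  + by move: wi; rewrite ev inE => /eqP ewv; move: p7 v7; rewrite epw ewv; lia.
- by move=> j k /H2 h /h /lift_inj.
- move=> v v7; rewrite !inE negb_or => /andP[vw vM]; have [j fj] := H3 v v7 vM.
  case: (unliftP i j) => [j'|] ej; first by exists j'; rewrite -ej.
  by move: wi; rewrite -ej fj inE => /eqP ewv; rewrite ewv eqxx in vw.
Qed.

Lemma sum_cls (R : realType) n (f : 'I_n -> {set 'I_14}) M (F : nat -> R) :
  \sum_(j < n) F (cl M (f j)) =
  (cnt f M 0)%:R * F 0%N + (cnt f M 1)%:R * F 1%N + (cnt f M 2)%:R * F 2%N + (cnt f M 3)%:R * F 3%N.
Proof.
elim: n f => [|n IH] f; first by rewrite big_ord0 /cnt !big_ord0 !mul0r !addr0.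
rewrite big_ord_recl IH !(cnt_lift _ _ _ ord0) !natrD.
have := cl_lt4 M (f ord0); case: (cl M (f ord0)) => [|[|[|[|]]]] //= _;
  rewrite ?mul0r ?mul1r ?addr0 ?add0r; lra.
Qed.

Lemma Ur_ge0 (R : realType) a x z : 0 <= Ur R a x z.
Proof. by rewrite /Ur divr_ge0. Qed.

Lemma V2D1 (M : {set 'I_14}) u : u \in V2 :\: M -> #|V2 :\: (u |: M)| = (#|V2 :\: M|).-1.
Proof.
move=> hu; have -> : V2 :\: (u |: M) = (V2 :\: M) :\ u.
  by apply/finset.setP => w; rewrite !inE negb_or; case: (eqVneq w u) => //=.
by rewrite (cardsD1 u (V2 :\: M)) hu.
Qed.

Lemma not_single_A (p w : 'I_14) : (p < 7)%N -> p |: V2 != [set w].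
Proof. by move=> hp; apply/eqP => e; have := card_pV2 hp; rewrite e cards1. Qed.

Lemma not_single_0 (w : 'I_14) : finset.set0 != [set w].
Proof. by apply/eqP => /finset.setP/(_ w); rewrite !inE eqxx. Qed.

Lemma main_bound (R : realType) n : forall (f : 'I_n -> {set 'I_14}) M a x z,
  InvS f M -> cnt f M 0 = a -> cnt f M 1 = x -> cnt f M 2 = z ->
  #|V2 :\: M| = x -> (a <= 7)%N -> (x + z <= 7)%N ->
  Dn R f M <= Ur R a x z.
Proof.
elim: n => [|n IH] f M a x z Hinv ea ex ez hV ha hxz; first by rewrite /= Ur_ge0.
pose Kc (c : nat) : R := if c == 0%N then 1 + (1 + x%:R)^-1 * (Ur R a.-1 x z + x%:R * Ur R a.-1 x.-1 z.+1)
  else if c == 1%N then 1 + Ur R a x.-1 z else if c == 2%N then Ur R a x z.-1 else Ur R a x z.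
have Hstep : forall i, stepR (f i) (Dn R (fun j => f (lift i j))) M <= Kc (cl M (f i)).
  move=> i; pose g : 'I_n -> {set 'I_14} := fun j => f (lift i j).
  rewrite -/g.
  have cg : forall c : nat, cnt f M c = ((cl M (f i) == c) + @cnt n g M c)%N by move=> c; exact: cnt_lift.
  have gne : forall w, f i = [set w] -> forall j, g j != [set w].
    move=> w fiw j; apply/eqP => e.
    have efe : f (lift i j) = f i by rewrite fiw -e.
    case: Hinv => _ H2 _; have nz : f (lift i j) != finset.set0 by rewrite efe fiw eq_sym not_single_0.
    by have := H2 _ _ efe nz => /eqP; rewrite eq_sym (negbTE (neq_lift i j)).
  case: (Hinv) => H1 H2 H3.
  case: (H1 i) => [fi0|[[p [p7 pM ep]]|[v [v7 ev]]]].
  -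
    have e0 : f i :\: M = finset.set0 by rewrite fi0 finset.set0D.
    rewrite (_ : cl M (f i) = 3%N); last by rewrite fi0 cl0.
    rewrite /Kc /stepR /= e0 eqxx.
    move: (cg 0%N) (cg 1%N) (cg 2%N); rewrite fi0 cl0 /= => c0 c1 c2.
    apply: IH => //; first exact: Inv_skip; lia.
  -
    have fiA : f i :\: M = p |: (V2 :\: M).
      apply/finset.setP => u; rewrite ep !inE; case: (eqVneq u p) => [->|nup] //=.
      by rewrite pM.
    have pV : p \notin V2 :\: M by rewrite inE negb_and notin_V2 ?orbT.
    have nz : (p |: (V2 :\: M) == finset.set0) = false.
      by apply/negbTE/finset.set0Pn; exists p; rewrite !inE eqxx.
    rewrite (_ : cl M (f i) = 0%N); last by rewrite ep clA.
    rewrite /Kc /stepR /= fiA nz finset.big_setU1 //= cardsU1 pV hV natrD lerD2l.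
    apply: ler_wpM2l; first by rewrite invr_ge0 addr_ge0 ?ler0n.
    move: (cg 0%N) (cg 1%N) (cg 2%N); rewrite ep clA // /= => c0 c1 c2.
    apply: lerD.
    + have cs : forall c : nat, cnt g (p |: M) c = cnt g M c.
        move=> c; apply: cnt_same => j; apply: cl_add.
        rewrite /g;         case: (H1 (lift i j)) => [->|[[p' [p'7 _ ->]]|[w [w7 ->]]]].
        * exact: not_single_0.
        * exact: not_single_A.
        * apply/eqP => /finset.set1_inj ewp; move: w7 p7; rewrite ewp; lia.
      have pin : p \in f i :\: M by rewrite fiA !inE eqxx.
      have hV' : #|V2 :\: (p |: M)| = x.
        rewrite -hV; congr (#|pred_of_set _|).
        apply/finset.setP => u; rewrite !inE; case: (eqVneq u p) => [->|] //=.
        by rewrite leqNgt p7 andbF.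
      apply: IH; rewrite ?cs //; first exact: Inv_take. all: try lia.
    + have Hu : forall u, u \in V2 :\: M -> Dn R g (u |: M) <= Ur R a.-1 x.-1 z.+1.
        move=> u hu; have uM : u \notin M by move: hu; rewrite !inE => /andP[].
        have u7 : (7 <= u)%N by move: hu; rewrite !inE => /andP[].
        have [j0 fj0] := H3 u u7 uM.
        case: (unliftP i j0) => [j0'|] ej0; last first.
          by move: fj0; rewrite ej0 ep => /eqP; rewrite (negbTE (not_single_A _ p7)).
        have gj0 : g j0' = [set u] by rewrite /g -ej0.
        have cc : forall c : nat, (cnt g (u |: M) c + (cl M (g j0') == c) = cnt g M c + (cl (u |: M) (g j0') == c))%N.
          move=> c; apply: cnt_change => j nj; apply: cl_add; apply/eqP => e.
          have efe : f (lift i j) = f (lift i j0') by rewrite -ej0 fj0 -e.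
          have nz' : f (lift i j) != finset.set0 by rewrite efe -ej0 fj0 eq_sym not_single_0.
          by move: (H2 _ _ efe nz') => /lift_inj ejj; rewrite ejj eqxx in nj.
        move: (cc 0%N) (cc 1%N) (cc 2%N); rewrite gj0 !cl1 (negbTE uM) finset.setU11 /= => d0 d1 d2.
        have uin : u \in f i :\: M by rewrite fiA finset.setU1r.
        have hV' := V2D1 hu.
        have x1 : (0 < #|V2 :\: M|)%N by apply/card_gt0P; exists u.
        apply: IH; first exact: Inv_take. all: try lia.
      apply: le_trans (ler_sum _ Hu) _.
      by rewrite sumr_const hV mulr_natl.
  -
    case: (boolP (v \in M)) => vM.
    + have e0 : f i :\: M = finset.set0.
        by apply/finset.setP => u; rewrite ev !inE; case: (eqVneq u v) => [->|]; rewrite ?vM ?andbF.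
      rewrite (_ : cl M (f i) = 2%N); last by rewrite ev cl1 vM.
      rewrite /Kc /stepR /= e0 eqxx.
      move: (cg 0%N) (cg 1%N) (cg 2%N); rewrite ev cl1 vM /= => c0 c1 c2.
      apply: IH => //; first exact: Inv_skip; lia.
    + have e1 : f i :\: M = [set v].
        by apply/finset.setP => u; rewrite ev !inE; case: (eqVneq u v) => [->|]; rewrite ?vM ?andbF.
      have vin : v \in f i :\: M by rewrite e1 inE.
      have nz : ([set v] == finset.set0) = false by rewrite eq_sym; apply/negbTE/not_single_0.
      rewrite (_ : cl M (f i) = 1%N); last by rewrite ev cl1 (negbTE vM).
      rewrite /Kc /stepR /= e1 nz finset.big_set1 cards1 invr1 mul1r lerD2l.
      have cs : forall c, cnt g (v |: M) c = cnt g M c.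
        by move=> c; apply: cnt_same => j; apply: cl_add; apply: gne.
      move: (cg 0%N) (cg 1%N) (cg 2%N); rewrite ev cl1 (negbTE vM) /= => c0 c1 c2.
      have vV : v \in V2 :\: M by rewrite !inE vM v7.
      have hV' := V2D1 vV.
      have x1 : (0 < #|V2 :\: M|)%N by apply/card_gt0P; exists v.
      apply: IH; rewrite ?cs //; first exact: Inv_take; lia.
rewrite /=.
apply: le_trans.
  apply: ler_wpM2l; first by rewrite invr_ge0 ler0n.
  apply: ler_sum => i _; exact: Hstep i.
rewrite sum_cls /Kc /= ea ex ez.
have tot := cnt_tot f M; rewrite ea ex ez in tot.
have hc := check_R R ha hxz.
move: tot; set e := cnt f M 3 => tot.
have En : (n.+1%:R : R) = a%:R + x%:R + z%:R + e%:R by rewrite -tot !natrD.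
have pos : 0 < a%:R + x%:R + z%:R + e%:R :> R by rewrite -En ltr0n.
rewrite En -(ler_pM2l pos) mulrA mulfV ?gt_eqF // mul1r.
lra.
Qed.

Definition nbr0 n (i : 'I_n) : {set 'I_14} :=
  if (i < 7)%N then (inord i) |: V2 else if (i < 14)%N then [set inord i] else finset.set0.

Lemma mem_nbr0 n (i : 'I_n) (w : 'I_14) :
  (w \in nbr0 i) = ((w : nat) == i) && (i < 14)%N || (i < 7)%N && (7 <= w)%N.
Proof.
rewrite /nbr0; case: ifP => h7.
  have h14 : (i < 14)%N by lia.
  by rewrite !inE -val_eqE /= inordK // h14 andbT.
case: ifP => h14; last by rewrite inE andbF.
by rewrite inE -val_eqE /= inordK // !andbT orbF.
Qed.

Lemma nbr0_ne0 n (i : 'I_n) : nbr0 i != finset.set0 -> (i < 14)%N.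
Proof.
by rewrite /nbr0; case: ifP => h7; [lia | case: ifP => // _; rewrite eqxx].
Qed.

Lemma Inv_nbr0 n : (14 <= n)%N -> InvS (@nbr0 n) finset.set0.
Proof.
move=> hn; split.
- move=> j; rewrite /nbr0; case: ifP => h7.
    right; left; exists (inord j); split => //; last by rewrite inE.
    by rewrite inordK //; lia.
  case: ifP => h14; last by left.
  by right; right; exists (inord j); split => //; rewrite inordK //; lia.
- move=> j k e ne; have j14 := nbr0_ne0 ne.
  have k14 : (k < 14)%N by apply: nbr0_ne0; rewrite -e.
  have hj : inord j \in nbr0 j by rewrite mem_nbr0 inordK // eqxx j14.
  have hk : inord k \in nbr0 k by rewrite mem_nbr0 inordK // eqxx k14.
  rewrite e mem_nbr0 inordK // in hj; rewrite -e mem_nbr0 inordK // in hk.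
  apply: val_inj => /=; move: hj hk.
  move=> /ssrbool.orP[/andP[/eqP -> _]//|/andP[k7 j7]] /ssrbool.orP[/andP[/eqP -> _]//|/andP[j7' k7']]; lia.
- move=> v v7 _.
  have vn : (v < n)%N by apply: leq_trans (ltn_ord v) hn.
  exists (Ordinal vn); rewrite /nbr0 /=.
  have -> : (v < 7)%N = false by lia.
  by rewrite ltn_ord inord_val.
Qed.

Definition clv (i : nat) : nat := if (i < 7)%N then 0 else if (i < 14)%N then 1 else 3.

Lemma cl_nbr0 n (i : 'I_n) : cl finset.set0 (nbr0 i) = clv i.
Proof.
rewrite /nbr0 /clv; case: ifP => h7; first by rewrite clA // inordK; lia.
by case: ifP => _; [rewrite cl1 inE | exact: cl0].
Qed.

Lemma cnt_nbr0 n (c : nat) : (14 <= n)%N -> (c < 3)%N ->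
  cnt (@nbr0 n) finset.set0 c = (\sum_(0 <= i < 14) (clv i == c))%N.
Proof.
move=> hn hc; rewrite /cnt (eq_bigr (fun i : 'I_n => nat_of_bool (clv i == c))); last first.
  by move=> i _; rewrite cl_nbr0.
rewrite -(big_mkord xpredT (fun i => nat_of_bool (clv i == c))).
rewrite (@big_cat_nat _ _ _ 14) // /=.
rewrite [X in (_ + X)%N]big1_seq ?addn0 // => i; rewrite mem_index_iota => /andP[_ /andP[h _]].
rewrite /clv; have -> : (i < 7)%N = false by lia.
have -> : (i < 14)%N = false by lia.
by case: c hc => [|[|[|]]].
Qed.

Definition inst n : instance n := @Instance n 14 (@nbr0 n).

Lemma opt_inst n (hn : (14 <= n)%N) : (14 <= opt (inst n))%N.
Proof.
pose Fm : {set 'I_n * 'I_14} := (fun w : 'I_14 => (widen_ord hn w, w)) @: [set: 'I_14].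
have cF : #|Fm| = 14%N.
  by rewrite card_imset ?cardsT ?card_ord // => w1 w2 [].
have mF : is_matching (I := inst n) Fm.
  rewrite /is_matching; apply/andP; split.
    apply/forallP => e; apply/implyP => /imsetP [w _ ->] /=.
    by rewrite mem_nbr0 /= eqxx ltn_ord.
  apply/forallP => e; apply/implyP => /imsetP [w _ ->].
  apply/forallP => e'; apply/implyP => /imsetP [w' _ ->] /=.
  apply/implyP => /ssrbool.orP [/eqP /(congr1 val) /= /val_inj -> // | /eqP -> //].
by rewrite /opt; move: (@leq_bigmax_cond {set 'I_n * 'I_14} _ (fun F : {set 'I_n * 'I_14} => #|F|) _ mF); rewrite cF.
Qed.


Lemma rand_val_ge0 (R : realType) m (s : seq {set 'I_m}) M : 0 <= rand_val R s M.
Proof.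
elim: s M => [|N s IH] M /=; first by [].
case: ifP => _; first exact: IH.
by rewrite addr_ge0 // mulr_ge0 ?invr_ge0 ?ler0n // sumr_ge0 // => u _; exact: IH.
Qed.

Lemma exp_ge0 (R : realType) n (I : instance n) : 0 <= exp_random R I.
Proof.
by rewrite /exp_random mulr_ge0 ?invr_ge0 ?ler0n // sumr_ge0 // => s _; exact: rand_val_ge0.
Qed.

Lemma ratio_ge0 (R : realType) n (I : instance n) : 0 <= Defs.ratio R I.
Proof. by rewrite /ratio divr_ge0 ?exp_ge0 ?ler0n. Qed.

Lemma Ur770 (R : realType) : Ur R 7 7 0 <= 21 / 2.
Proof.
have h : (2 * uval 7 7 0 <= 21 * Knat)%N.
  have := final_check; rewrite /uval /Knat.
  move: (uget 7 7 0) Kn => q k /N.leb_le hq; rewrite -!lock. lia.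
rewrite /Ur; have kp := Kpos; move: (uval 7 7 0) (Knat) h kp => q k h kp.
rewrite ler_pdivrMr ?ltr0n //.
move: h; rewrite -(ler_nat R) !natrM => h; lra.
Qed.

Lemma exp_inst (R : realType) n : (14 <= n)%N -> exp_random R (inst n) <= Ur R 7 7 0.
Proof.
move=> hn; rewrite /exp_random perm_sum card_Sn mulrA mulVf ?mul1r; last first.
  by rewrite pnatr_eq0 -lt0n fact_gt0.
change (Dn R (@nbr0 n) finset.set0 <= Ur R 7 7 0).
apply: main_bound; first exact: Inv_nbr0.
- by rewrite cnt_nbr0 // unlock.
- by rewrite cnt_nbr0 // unlock.
- by rewrite cnt_nbr0 // unlock.
- by rewrite finset.setD0 cardV2.
- by [].
- by [].
Qed.

Lemma ratio_inst (R : realType) n : (14 <= n)%N -> Defs.ratio R (inst n) <= 3 / 4.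
Proof.
move=> hn; have ho := opt_inst hn.
have e0 := exp_ge0 R (inst n); have eU := exp_inst R hn; have U2 := Ur770 R.
rewrite /ratio.
have o14 : (14 : R) <= (opt (inst n))%:R by rewrite (ler_nat R 14).
apply: (@le_trans _ _ (exp_random R (inst n) / 14)).
  apply: ler_wpM2l => //; rewrite lef_pV2 ?posrE //; lra.
lra.
Qed.

Lemma ratio_inf_ge0 (R : realType) n : 0 <= ratio_inf R n.
Proof.
rewrite /ratio_inf; set S := (X in inf X).
case: (pselect (S !=set0)%classic) => [ne|ne].
  by apply: lb_le_inf => // r [I [_ <-]]; exact: ratio_ge0.
have -> : S = set0 by apply/seteqP; split => // r Sr; apply: ne; exists r.
by rewrite inf0.
Qed.

Lemma ratio_inf_le (R : realType) n : (14 <= n)%N -> ratio_inf R n <= 3 / 4.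
Proof.
move=> hn; apply: le_trans (ratio_inst R hn).
apply: ge_inf; last by exists (inst n); split => //; apply: leq_trans (opt_inst hn).
by exists 0 => r [I [_ <-]]; exact: ratio_ge0.
Qed.

Theorem theorem9 (R : realType) : asymptotic_ratio_random R <= 3 / 4.
Proof.
rewrite /asymptotic_ratio_random /limn_inf.
set u := fun n => ratio_inf R n.
have u0 : forall n, 0 <= u n by move=> n; exact: ratio_inf_ge0.
have hl : has_lbound (range u) by exists 0 => _ [n _ <-]; exact: u0.
have ub : forall n, infs u n <= 3 / 4.
  move=> n; rewrite /infs /=.
  apply: (@le_trans _ _ (u (maxn n 14))).
    apply: ge_inf; first by exists 0 => _ [k _ <-]; exact: u0.
    by exists (maxn n 14) => //=; rewrite leq_maxl.
  by apply: ratio_inf_le; rewrite leq_maxr.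
have cv : cvgn (infs u).
  apply: nondecreasing_is_cvgn; first exact: nondecreasing_infs.
  by exists (3 / 4) => _ [n _ <-]; exact: ub.
by apply: limr_le => //; apply: nearW.
Qed.
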